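(* Let $m = m_0 + x m_1 \in R_r$ satisfy $m \equiv x \pmod t$ and $\deg m_1 - \deg m_0 < -1$, and let $N \ge 1$. The map $\Phi_m : R_r/(t^N) \to \{0,1,x,1+x\}^N$ sending the class of $f$ to the first $N$ terms of its parity sequence is well defined and is a bijection. Moreover, for each $(p_0,\dots,p_{N-1}) \in \{0,1,x,1+x\}^N$, with $s(N) = \#\{0 \le k < N : p_k = 1+x\}$, there exist $g_{N-1}, h_{N-1} \in R_r$ with $\deg g_{N-1} < N$ and $\deg h_{N-1} < s(N)\deg m$ such that the elements of $R_r$ whose parity sequence begins with $(p_0,\dots,p_{N-1})$ are exactly those of the form $f = g_{N-1} + t^N q$ with $q \in R_r$, and for each such $f$ one has $T^N(f) = h_{N-1} + m^{s(N)} q$. In particular, the first $N$ parity terms of a uniformly random element of $R_r$ of degree $< N$ are uniformly distributed on $\{0,1,x,1+x\}^N$.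
   Context: Let $r(t) = t^2 + t + 1$ and $R_r = \mathbb{F}_2[x,t]/(x^2 + tx + r(t))$. Every $f \in R_r$ is uniquely $f = f_0(t) + x f_1(t)$ with $f_0, f_1 \in \mathbb{F}_2[t]$, and $\deg f = \max\{\deg f_0, \deg f_1\}$ (degrees in $t$, $\deg 0 = -\infty$). Modulo $t$ every element is congruent to exactly one of $0, 1, x, 1+x$. For $m \in R_r$ with $m \equiv x \pmod t$, the $mx+1$ map $T: R_r \to R_r$ is $T(f) = (mf + 1 + x)/t$ if $f \equiv 1+x$, $T(f) = (f+x)/t$ if $f \equiv x$, $T(f) = (f+1)/t$ if $f \equiv 1$, and $T(f) = f/t$ if $f \equiv 0 \pmod t$. The parity sequence of $f$ is $(p_0,p_1,\dots)$ where $p_k \in \{0,1,x,1+x\}$ is the residue of $T^k(f)$ modulo $t$. *)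

(* Defs.v *)
From HB Require Import structures.
From mathcomp Require Import all_boot all_order all_algebra.
Set Implicit Arguments. Unset Strict Implicit. Unset Printing Implicit Defensive.
Import GRing.Theory.
Local Open Scope ring_scope.

(* Base polynomial ring F_2[t]; t is represented by 'X. *)
Notation P := {poly 'F_2}.

(* R_r = F_2[x,t]/(x^2 + t x + r(t)), r(t) = t^2 + t + 1.
   An element f = f0(t) + x f1(t) is represented by the pair (f0, f1). *)
Definition Rr := (P * P)%type.

Definition rpoly : P := 'X^2 + 'X + 1.

Definition radd (f g : Rr) : Rr := (f.1 + g.1, f.2 + g.2).

(* (a + x b)(c + x d) = ac + x(ad+bc) + x^2 bd,  x^2 = t x + r(t) (char 2) *)
Definition rmul (f g : Rr) : Rr :=
  (f.1 * g.1 + rpoly * (f.2 * g.2),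
   f.1 * g.2 + f.2 * g.1 + 'X * (f.2 * g.2)).

Definition rzero : Rr := (0, 0).
Definition rone  : Rr := (1, 0).
Definition rx    : Rr := (0, 1).
Definition r1x   : Rr := (1, 1).

Definition tpow (N : nat) : Rr := ('X^N, 0).

Definition rpow (m : Rr) (k : nat) : Rr := iter k (rmul m) rone.

(* size of f = 1 + deg f (0 for f = 0), deg f = max(deg f0, deg f1).
   Hence  deg f < k  <->  rsize f <= k  for k : nat. *)
Definition rsize (f : Rr) : nat := maxn (size f.1) (size f.2).

(* residue of f modulo t, as one of the representatives 0, 1, x, 1+x *)
Definition par (f : Rr) : Rr := ((f.1.[0])%:P, (f.2.[0])%:P).

(* division by t (exact when applied to multiples of t) *)
Definition divt (f : Rr) : Rr := (f.1 %/ 'X, f.2 %/ 'X).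

Definition Tmap (m : Rr) (f : Rr) : Rr :=
  if par f == r1x then divt (radd (rmul m f) r1x)
  else if par f == rx then divt (radd f rx)
  else if par f == rone then divt (radd f rone)
  else divt f.

Definition parseq (m : Rr) (N : nat) (f : Rr) : seq Rr :=
  [seq par (iter k (Tmap m) f) | k <- iota 0 N].

Definition residues : seq Rr := [:: rzero; rone; rx; r1x].

Definition s_count (p : seq Rr) : nat := count (pred1 r1x) p.

(* Main.v *)
Require Import Defs.
From HB Require Import structures.
From mathcomp Require Import all_boot all_order all_algebra.
From mathcomp Require Import ring zify.
Import GRing.Theory.
Local Open Scope ring_scope.

Definition sc (c : P) (u : Rr) : Rr := (c * u.1, c * u.2).
Definition cfac (m f u : Rr) : Rr := if par f == r1x then rmul m u else u.

Lemma pairE (a b c d : P) : a = c -> b = d -> (a, b) = (c, d).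
Proof. by move=> -> ->. Qed.

Lemma hX0 (q : P) (p : P) : (p + 'X * q).[0] = p.[0].
Proof. by rewrite hornerD mulrC hornerMX mulr0 addr0. Qed.

Lemma par_addX f u : par (radd f (sc 'X u)) = par f.
Proof. by rewrite /par /radd /sc /= !hX0. Qed.

Lemma divt_addX v w : divt (radd v (sc 'X w)) = radd (divt v) w.
Proof.
rewrite /divt /radd /sc /=; apply: pairE; rewrite divpD mulKp ?polyX_eq0 //.
Qed.

Lemma Tstep m f u : Tmap m (radd f (sc 'X u)) = radd (Tmap m f) (cfac m f u).
Proof.
rewrite /Tmap /cfac par_addX.
case: ifP => H1.
  have -> : radd (rmul m (radd f (sc 'X u))) r1x
           = radd (radd (rmul m f) r1x) (sc 'X (rmul m u)).
    by rewrite /radd /rmul /sc /=; apply: pairE; ring.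
  by rewrite divt_addX.
case: ifP => H2.
  have -> : radd (radd f (sc 'X u)) rx = radd (radd f rx) (sc 'X u).
    by rewrite /radd /sc /=; apply: pairE; ring.
  by rewrite divt_addX.
case: ifP => H3.
  have -> : radd (radd f (sc 'X u)) rone = radd (radd f rone) (sc 'X u).
    by rewrite /radd /sc /=; apply: pairE; ring.
  by rewrite divt_addX.
by rewrite divt_addX.
Qed.

Lemma scX n u : sc ('X^(n.+1)) u = sc 'X (sc 'X^n u).
Proof. by rewrite /sc /=; apply: pairE; rewrite exprS mulrA. Qed.

Lemma rmul_sc m c u : rmul m (sc c u) = sc c (rmul m u).
Proof. by rewrite /rmul /sc /=; apply: pairE; ring. Qed.

Lemma TstepN m n f u :
  Tmap m (radd f (sc 'X^(n.+1) u)) = radd (Tmap m f) (sc 'X^n (cfac m f u)).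
Proof.
rewrite scX Tstep; congr radd.
by rewrite /cfac; case: ifP => //; rewrite rmul_sc.
Qed.

Lemma parseqS m k f : parseq m k.+1 f = par f :: parseq m k (Tmap m f).
Proof.
rewrite /parseq -add1n iotaD /=.
have -> : iota (0 + 1) k = map (addn 1) (iota 0 k) by rewrite -iotaDl.
rewrite -map_comp; congr cons; apply: eq_map => i /=; by rewrite add0n -iterSr.
Qed.

Lemma parseq_rcons m k f :
  parseq m k.+1 f = rcons (parseq m k f) (par (iter k (Tmap m) f)).
Proof. by rewrite /parseq -addn1 iotaD map_cat /= cats1. Qed.

Lemma rmul1 u : rmul rone u = u.
Proof. by case: u => a b; rewrite /rmul /=; apply: pairE; ring. Qed.

Lemma sc1 u : sc 1 u = u.
Proof. by case: u => a b; rewrite /sc /= !mul1r. Qed.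

Lemma rmulAC a b u : rmul a (rmul b u) = rmul (rmul b a) u.
Proof. by rewrite /rmul /=; apply: pairE; ring. Qed.

Lemma lemA m k n f u :
  iter k (Tmap m) (radd f (sc 'X^(k+n) u))
  = radd (iter k (Tmap m) f) (sc 'X^n (rmul (rpow m (s_count (parseq m k f))) u)).
Proof.
elim: k f u => [|k IH] f u.
  by rewrite /= /rpow /= rmul1.
rewrite !iterSr addSn TstepN IH parseqS /s_count /=.
congr radd; congr sc.
rewrite /cfac; case: ifP => H //=.
by rewrite rmulAC.
Qed.

Lemma lemB m k n f u : parseq m k (radd f (sc 'X^(k+n) u)) = parseq m k f.
Proof.
elim: k f u => [|k IH] f u //.
rewrite !parseqS addSn TstepN IH scX par_addX //.
Qed.

Lemma sc_inj c a b : c != 0 -> sc c a = sc c b -> a = b.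
Proof.
move=> hc; case: a => a1 a2; case: b => b1 b2; rewrite /sc /= => -[h1 h2].
by rewrite (mulfI hc h1) (mulfI hc h2).
Qed.

Lemma radd_inj a b c : radd a b = radd a c -> b = c.
Proof.
case: b => b1 b2; case: c => c1 c2; rewrite /radd /= => -[h1 h2].
by rewrite (addrI _ h1) (addrI _ h2).
Qed.

Lemma parzero (p : P) : p.[0] = 0 -> p = 'X * (p %/ 'X).
Proof.
move=> h; have : ('X - 0%:P) %| p by rewrite dvdp_XsubCl /root h.
by rewrite polyC0 subr0 => /divpK; rewrite mulrC => ->.
Qed.

Lemma polyC_h (c : 'F_2) (d : P) : c%:P = d -> c = d.[0].
Proof. by move<-; rewrite hornerC. Qed.

Lemma parm m : par m = rx -> m.1.[0] = 0 /\ m.2.[0] = 1.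
Proof.
rewrite /par /rx => -[/polyC_h h1 /polyC_h h2]; move: h1 h2; rewrite horner0 hornerC.
by [].
Qed.

Lemma rpoly0 : rpoly.[0] = 1.
Proof. by rewrite /rpoly !hornerE /= expr0n /= !add0r. Qed.

Lemma lemD m k u q : par m = rx -> rmul m u = sc 'X^k q -> exists q', u = sc 'X^k q'.
Proof.
move=> /parm [hm1 hm2]; elim: k u q => [|k IH] u q.
  by move=> _; exists u; rewrite expr0 sc1.
move=> h.
have h1 := congr1 (fun v : Rr => v.1.[0]) h.
have h2 := congr1 (fun v : Rr => v.2.[0]) h.
move: h1 h2; rewrite /rmul /sc /= !hornerD !hornerM rpoly0 ?hornerM hm1 hm2 hornerX hornerXn expr0n /=.
rewrite !mul0r !mul1r !add0r ?mulr0 ?addr0.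
move=> hu2 hu1.
have hu : u = sc 'X (divt u).
  by case: u h hu1 hu2 => u1 u2 /= _ hu1 hu2; rewrite /sc /divt /= -(parzero _ hu1) -(parzero _ hu2).
have := h; rewrite [in rmul m u]hu rmul_sc scX => /sc_inj {}h.
have [q' hq'] := IH _ _ (h (negbT (polyX_eq0 _))).
by exists q'; rewrite hu hq' -scX.
Qed.

Lemma lemC m k f g : par m = rx -> parseq m k f = parseq m k g ->
  exists q, f = radd g (sc 'X^k q).
Proof.
move=> hm; elim: k f g => [|k IH] f g.
  move=> _; exists (f.1 - g.1, f.2 - g.2); rewrite expr0 sc1.
  by case: f => f1 f2; case: g => g1 g2; rewrite /radd /=; apply: pairE; ring.
rewrite !parseqS => h0; have hp : par f = par g := congr1 (head rzero) h0.
have [q hq] := IH _ _ (congr1 behead h0).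
have [u hf] : exists u, f = radd g (sc 'X u).
  exists (divt (f.1 - g.1, f.2 - g.2)).
  move: hp; rewrite /par => -[/polyC_inj h1 /polyC_inj h2].
  have e1 : (f.1 - g.1).[0] = 0 by rewrite hornerD hornerN h1 subrr.
  have e2 : (f.2 - g.2).[0] = 0 by rewrite hornerD hornerN h2 subrr.
  clear h0 h1 h2; case: f e1 e2 {hq} => f1 f2; case: g => g1 g2 /= e1 e2.
  rewrite /radd /sc /divt /= -(parzero _ e1) -(parzero _ e2).
  by apply: pairE; ring.
move: hq; rewrite hf Tstep => /radd_inj; rewrite /cfac; case: ifP => _ h.
  have [q' hq'] := lemD _ _ _ _ hm h.
  by exists q'; rewrite hq' -scX.
by exists q; rewrite h -scX.
Qed.

Lemma resid_par a : a \in residues -> a = par a.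
Proof.
rewrite !inE => /or4P [] /eqP ->; rewrite /par /= ?horner0 ?hornerC ?polyC0 //.
Qed.

Lemma rpow_par m s : par m = rx ->
  (rpow m s).1.[0] = (~~ odd s)%:R /\ (rpow m s).2.[0] = (odd s)%:R.
Proof.
move=> /parm [hm1 hm2]; elim: s => [|s [IH1 IH2]].
  by rewrite /rpow /= hornerC horner0.
rewrite /rpow /= -/(rpow m s).
rewrite !hornerD !hornerM rpoly0 ?hornerM hm1 hm2 IH1 IH2 hornerX negbK.
split; ring.
Qed.

Lemma size_scX k (c1 : 'F_2) (p : P) : (size p <= k)%N -> (size (p + 'X^k * c1%:P)%R <= k.+1)%N.
Proof.
move=> hp; apply: leq_trans (size_polyD _ _) _.
have := size_polyMleq ('X^k) c1%:P; rewrite size_polyXn size_polyC.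
move=> h; rewrite geq_max (leq_trans hp (leqnSn _)) /=; apply: leq_trans h _; case: (c1 != 0) => /=; lia.
Qed.

Lemma lemE m p : par m = rx -> all (fun a => a \in residues) p ->
  exists g, (rsize g <= size p)%N /\ parseq m (size p) g = p.
Proof.
move=> hm; elim/last_ind: p => [|p a IH].
  by move=> _; exists rzero; rewrite /rsize /= size_poly0.
rewrite all_rcons => /andP [ha hp]; have [g' [hs hq]] := IH hp.
set k := size p.
set F := iter k (Tmap m) g'.
set s := s_count (parseq m k g').
set d1 := a.1.[0] - F.1.[0]; set d2 := a.2.[0] - F.2.[0].
set e : Rr := if odd s then (d2%:P, d1%:P) else (d1%:P, d2%:P).
have [e1 [e2 he]] : exists e1 e2, e = (e1%:P, e2%:P).
  by rewrite /e; case: (odd s); [exists d2, d1 | exists d1, d2].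
exists (radd g' (sc 'X^k e)); split.
  rewrite size_rcons /rsize /radd /sc he /=; move: hs; rewrite /rsize geq_max => /andP [h1 h2].
  by rewrite geq_max !size_scX.
rewrite size_rcons parseq_rcons.
have := lemB m k 0 g' e; rewrite addn0 => ->; rewrite hq; congr rcons.
have := lemA m k 0 g' e; rewrite addn0 expr0 sc1 => ->.
rewrite [RHS](resid_par _ ha) /par /radd /rmul /=.
have [M1 M2] := rpow_par m s hm.
rewrite -/s -/F.
rewrite !hornerD !hornerM rpoly0 ?hornerM M1 M2 hornerX.
rewrite /e /d1 /d2; case: (odd s) => /=; rewrite !hornerC; apply: pairE; congr polyC; ring.
Qed.

Lemma maxn_sub1 a b : maxn (a - 1) (b - 1) = (maxn a b - 1)%N.
Proof. lia. Qed.

Lemma rsize_divt v : rsize (divt v) = (rsize v - 1)%N.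
Proof.
rewrite /rsize /divt /= !size_divp ?polyX_eq0 // size_polyX /=.
exact: maxn_sub1.
Qed.

Lemma rsize_radd a b : (rsize (radd a b) <= maxn (rsize a) (rsize b))%N.
Proof.
rewrite /rsize /radd /=.
have := size_polyD a.1 b.1; have := size_polyD a.2 b.2.
set x1 := size a.1; set x2 := size a.2; set x3 := size b.1; set x4 := size b.2.
set x5 := size (a.1 + b.1); set x6 := size (a.2+b.2). lia.
Qed.

Lemma rpoly_size : (size rpoly <= 3)%N.
Proof.
rewrite /rpoly; apply: leq_trans (size_polyD _ _) _.
rewrite geq_max size_poly1 andbT; apply: leq_trans (size_polyD _ _) _.
by rewrite size_polyXn size_polyX.
Qed.

Lemma rsize_rmul (m f : Rr) : (0 < size m.2)%N -> ((size m.2).+1 < size m.1)%N ->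
  (rsize (rmul m f) <= (rsize m).-1 + rsize f)%N.
Proof.
move=> h0 h1; rewrite /rsize /rmul /=.
have a1 := size_polyMleq m.1 f.1.
have a2 := size_polyMleq m.2 f.2.
have a3 := size_polyMleq rpoly (m.2 * f.2).
have a4 := size_polyMleq m.1 f.2.
have a5 := size_polyMleq m.2 f.1.
have a6 := size_polyMleq 'X (m.2 * f.2).
have b1 := size_polyD (m.1 * f.1) (rpoly * (m.2 * f.2)).
have b2 := size_polyD (m.1 * f.2 + m.2 * f.1) ('X * (m.2 * f.2)).
have b3 := size_polyD (m.1 * f.2) (m.2 * f.1).
have := rpoly_size; rewrite size_polyX in a6.
set x1 := size m.1 in a1 a4 h1 *; set x2 := size m.2 in a2 a5 h0 h1 *.
set y1 := size f.1 in a1 a5 *; set y2 := size f.2 in a2 a4 *.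
set z1 := size (m.1 * f.1) in a1 b1 *.
set z2 := size (m.2 * f.2) in a2 a3 a6 *.
set z3 := size (rpoly * (m.2 * f.2)) in a3 b1 *.
set z4 := size (m.1 * f.2) in a4 b3 *.
set z5 := size (m.2 * f.1) in a5 b3 *.
set z6 := size ('X * (m.2 * f.2)) in a6 b2 *.
set z7 := size (m.1 * f.2 + m.2 * f.1) in b2 b3 *.
set w1 := size (m.1 * f.1 + rpoly * (m.2 * f.2)) in b1 *.
set w2 := size (m.1 * f.2 + m.2 * f.1 + 'X * (m.2 * f.2)) in b2 *.
set r := size rpoly.
lia.
Qed.

Lemma Tsize (m f : Rr) : (0 < size m.2)%N -> ((size m.2).+1 < size m.1)%N ->
  (rsize (Tmap m f) <= (if par f == r1x then (rsize m).-1 else 0) + (rsize f - 1))%N.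
Proof.
move=> h0 h1; rewrite /Tmap.
have r1 : rsize r1x = 1%N by rewrite /rsize /= size_poly1.
have r2 : rsize rx = 1%N by rewrite /rsize /= size_poly1 size_poly0.
have r3 : rsize rone = 1%N by rewrite /rsize /= size_poly1 size_poly0.
case: ifP => H1.
  have pos : (0 < size f.1)%N.
    rewrite lt0n size_poly_eq0; apply/negP => /eqP h.
    move/eqP: H1; rewrite /par h horner0 polyC0 => -[] /eqP.
    by rewrite eq_sym oner_eq0.
  rewrite rsize_divt.
  have := rsize_radd (rmul m f) r1x; have := rsize_rmul m f h0 h1.
  have : (size f.1 <= rsize f)%N by rewrite /rsize leq_maxl.
  rewrite r1; lia.
rewrite add0n; case: ifP => H2.
  rewrite rsize_divt; have := rsize_radd f rx; rewrite r2; lia.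
case: ifP => H3.
  rewrite rsize_divt; have := rsize_radd f rone; rewrite r3; lia.
rewrite rsize_divt; lia.
Qed.

Lemma lemF (m : Rr) k (f : Rr) : (0 < size m.2)%N -> ((size m.2).+1 < size m.1)%N ->
  (rsize (iter k (Tmap m) f) <= s_count (parseq m k f) * (rsize m).-1 + (rsize f - k))%N.
Proof.
move=> h0 h1; elim: k f => [|k IH] f.
  by rewrite /= subn0.
rewrite iterSr parseqS /s_count /= -/(s_count _).
have := IH (Tmap m f); have := Tsize m f h0 h1.
case: (par f == r1x) => /=; rewrite ?mulnDl; lia.
Qed.

Lemma tpowE N q : rmul (tpow N) q = sc 'X^N q.
Proof. by rewrite /rmul /tpow /sc /=; apply: pairE; ring. Qed.

Lemma size_m2 m : par m = rx -> (0 < size m.2)%N.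
Proof.
move=> /parm [_ h]; rewrite lt0n size_poly_eq0; apply/negP => /eqP h0.
by move: h; rewrite h0 horner0 => /eqP; rewrite eq_sym oner_eq0.
Qed.

Lemma uniq0 N (p r u : P) : (size p <= N)%N -> (size r <= N)%N -> p = r + 'X^N * u -> u = 0.
Proof.
move=> hp hr he; apply/eqP/negPn/negP => hu.
have e : 'X^N * u = p - r by rewrite he; ring.
have := size_polyD p (- r); rewrite size_polyN -e (size_mul (monic_neq0 (monicXn _ _)) hu).
rewrite size_polyXn; have : (0 < size u)%N by rewrite lt0n size_poly_eq0.
set a := size u; set b := size p; set c := size r. lia.
Qed.

Theorem mainTheorem10 (m : Rr) (N : nat) :
  par m = rx ->
  ((size m.2).+1 < size m.1)%N ->
  (0 < N)%N ->
  (* Phi_m : R_r/(t^N) -> {0,1,x,1+x}^N is well defined *)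
  (forall f g q : Rr, f = radd g (rmul (tpow N) q) -> parseq m N f = parseq m N g)
  (* ... injective *)
  /\ (forall f g : Rr, parseq m N f = parseq m N g ->
        exists q : Rr, f = radd g (rmul (tpow N) q))
  (* ... surjective onto {0,1,x,1+x}^N *)
  /\ (forall p : seq Rr, size p = N -> all (fun a => a \in residues) p ->
        exists f : Rr, parseq m N f = p)
  (* the structure of the cylinder sets *)
  /\ (forall p : seq Rr, size p = N -> all (fun a => a \in residues) p ->
        exists g h : Rr,
          (rsize g <= N)%N /\
          (rsize h <= s_count p * (rsize m).-1)%N /\
          (forall f : Rr, parseq m N f = p <->
             exists q : Rr, f = radd g (rmul (tpow N) q)) /\
          (forall q : Rr,
             iter N (Tmap m) (radd g (rmul (tpow N) q))
             = radd h (rmul (rpow m (s_count p)) q)))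
  (* uniformity: each parity vector is the prefix of exactly one f with deg f < N *)
  /\ (forall p : seq Rr, size p = N -> all (fun a => a \in residues) p ->
        exists! f : Rr, (rsize f <= N)%N /\ parseq m N f = p).
Proof.
move=> hm hsz _.
have h0 := size_m2 _ hm.
have WD : forall g q, parseq m N (radd g (rmul (tpow N) q)) = parseq m N g.
  by move=> g q; rewrite tpowE; have := lemB m N 0 g q; rewrite addn0.
have INJ : forall f g : Rr, parseq m N f = parseq m N g ->
        exists q : Rr, f = radd g (rmul (tpow N) q).
  by move=> f g /(lemC _ _ _ _ hm) [q ->]; exists q; rewrite tpowE.
split; first by move=> f g q ->; apply: WD.
split; first exact: INJ.
split.
  by move=> p hs ha; have [g [_ h]] := lemE _ _ hm ha; exists g; rewrite -hs.
split.
  move=> p hs ha; have [g [hg hpg]] := lemE _ _ hm ha; rewrite hs in hg hpg.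
  exists g, (iter N (Tmap m) g); split => //; split.
    have := lemF m N g h0 hsz; rewrite hpg.
    have -> : (rsize g - N = 0)%N by apply/eqP; rewrite subn_eq0.
    by rewrite addn0.
  split.
    move=> f; split.
      by move=> hf; apply: INJ; rewrite hf hpg.
    by move=> [q ->]; rewrite WD.
  move=> q; rewrite tpowE; have := lemA m N 0 g q.
  by rewrite addn0 expr0 sc1 hpg.
move=> p hs ha; have [g [hg hpg]] := lemE _ _ hm ha; rewrite hs in hg hpg.
exists g; split; first by split.
move=> f [hf hpf].
have [q hq] := INJ g f (etrans hpg (esym hpf)).
move: hq; rewrite tpowE => hq.
move: hg hf; rewrite /rsize !geq_max => /andP [g1 g2] /andP [f1 f2].
have q1 := uniq0 _ _ _ _ g1 f1 (congr1 fst hq).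
have q2 := uniq0 _ _ _ _ g2 f2 (congr1 snd hq).
rewrite hq; case: q q1 q2 {hq} => a b /= -> ->.
by case: f {f1 f2 hpf} => c d; rewrite /radd /sc /= !mulr0 !addr0.
Qed.
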